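(* Let $N,T\ge1$, $\boldsymbol E\in\mathbb{C}^{N\times T}$, $H(x,\boldsymbol y)=\|\boldsymbol E-\boldsymbol a(x)\boldsymbol y^H\|_F^2$, and let $L:\mathbb C^T\to(0,\infty)$ be such that Assumption A holds. Let $\{\boldsymbol z^k\}=\{(x^k,\boldsymbol y^k)\}$ be generated by the cubic-regularized alternating scheme from $\boldsymbol z^0$, and assume this sequence is bounded. Let $\omega(\boldsymbol z^0)$ be the set of all $\bar{\boldsymbol z}\in\mathbb R\times\mathbb C^T$ for which there is an increasing sequence of integers $\{k_l\}$ with $\boldsymbol z^{k_l}\to\bar{\boldsymbol z}$. Then: (i) $\omega(\boldsymbol z^0)$ is nonempty and $\omega(\boldsymbol z^0)\subseteq\operatorname{crit}H:=\{\boldsymbol z:\nabla_{\boldsymbol z}H(\boldsymbol z)=0\}$; (ii) $\lim_{k\to\infty}\operatorname{dist}(\boldsymbol z^k,\omega(\boldsymbol z^0))=0$.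
   Context: Steering vector: $\boldsymbol a(x)=\frac{1}{\sqrt N}[1,e^{jx},\dots,e^{j(N-1)x}]^T$ for $x\in\mathbb R$. Cubic-regularized alternating scheme: given $H:\mathbb{R}\times\mathbb{C}^T\to\mathbb{R}$, a function $L:\mathbb{C}^T\to(0,\infty)$ and an initial point $(x^0,\boldsymbol y^0)$, for $k\ge0$ define $$\xi_k(x)=\partial_x H(x^k,\boldsymbol y^k)(x-x^k)+\tfrac12\,\partial^2_{xx}H(x^k,\boldsymbol y^k)(x-x^k)^2+\tfrac{L(\boldsymbol y^k)}{6}|x-x^k|^3,$$ $$x^{k+1}\in\arg\min_{x\in\mathbb R}\xi_k(x),\qquad \boldsymbol y^{k+1}\in\arg\min_{\boldsymbol y\in\mathbb{C}^T}H(x^{k+1},\boldsymbol y),$$ and write $\boldsymbol z^k=(x^k,\boldsymbol y^k)$. Assumption A: (i) $H$ is bounded below. (ii) For every fixed $\boldsymbol y$, $x\mapsto H(x,\boldsymbol y)$ is twice continuously differentiable with $|\partial^2_{xx}H(x_1,\boldsymbol y)-\partial^2_{xx}H(x_2,\boldsymbol y)|\le L(\boldsymbol y)|x_1-x_2|$. (iii) There is $\nu>0$ such that for every fixed $x$, $\boldsymbol y\mapsto H(x,\boldsymbol y)-\frac{\nu}{2}\|\boldsymbol y\|^2$ is convex on $\mathbb C^T\cong\mathbb R^{2T}$. (iv) There exist $0<\lambda^-\le\lambda^+$ with $\lambda^-\le L(\boldsymbol y^k)\le\lambda^+$ for all $k$. $\nabla_{\boldsymbol z}H=(\partial_xH,\nabla_{\boldsymbol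 y}H)$ with $\nabla_{\boldsymbol y}$ the Wirtinger gradient with respect to $\boldsymbol y$; $\operatorname{dist}(\boldsymbol z,S)=\inf_{\boldsymbol s\in S}\|\boldsymbol z-\boldsymbol s\|$. *)

(* Defs.v *)
From Stdlib Require Import Reals.
From Coquelicot Require Import Coquelicot.
From mathcomp Require Import ssreflect ssrbool eqtype ssrnat fintype bigop.

Open Scope R_scope.

Definition cvec (T : nat) := 'I_T -> C.

(* steering vector a(x) = 1/sqrt N [1, e^{jx}, ..., e^{j(N-1)x}]^T *)
Definition steer (N : nat) (x : R) : cvec N :=
  fun n => ((cos (INR n * x)) / sqrt (INR N), (sin (INR n * x)) / sqrt (INR N)).

Definition Hfun (N T : nat) (E : 'I_N -> 'I_T -> C) (x : R) (y : cvec T) : R :=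
  \big[Rplus/R0]_(n < N) \big[Rplus/R0]_(t < T)
     (Cmod (Cminus (E n t) (Cmult (steer N x n) (Cconj (y t))))) ^ 2.

Definition cvnorm2 (T : nat) (y : cvec T) : R :=
  \big[Rplus/R0]_(t < T) (Cmod (y t)) ^ 2.

Definition znorm (T : nat) (z : R * cvec T) : R :=
  sqrt ((fst z) ^ 2 + cvnorm2 T (snd z)).

Definition zsub (T : nat) (z w : R * cvec T) : R * cvec T :=
  (fst z - fst w, fun t => Cminus (snd z t) (snd w t)).

Definition cvcomb (T : nat) (th : R) (y1 y2 : cvec T) : cvec T :=
  fun t => Cplus (Cmult (RtoC th) (y1 t)) (Cmult (RtoC (1 - th)) (y2 t)).

Definition convex_cv (T : nat) (f : cvec T -> R) : Prop :=
  forall (y1 y2 : cvec T) (th : R), 0 <= th <= 1 ->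
    f (cvcomb T th y1 y2) <= th * f y1 + (1 - th) * f y2.

Definition cvupd (T : nat) (y : cvec T) (t : 'I_T) (c : C) : cvec T :=
  fun t' => if t' == t then Cplus (y t') c else y t'.

Definition dxH (N T : nat) E (x : R) (y : cvec T) : R :=
  Derive (fun s => Hfun N T E s y) x.
Definition dxxH (N T : nat) E (x : R) (y : cvec T) : R :=
  Derive (fun s => dxH N T E s y) x.

(* Wirtinger gradient w.r.t. y (conjugate derivative):
   (grad_y H)_t = dH/d(conj y_t) = 1/2 (dH/du_t + j dH/dv_t),  y_t = u_t + j v_t *)
Definition wirt_grad (N T : nat) E (x : R) (y : cvec T) : cvec T :=
  fun t =>
    ( / 2 * Derive (fun s => Hfun N T E x (cvupd T y t (RtoC s))) 0,
      / 2 * Derive (fun s => Hfun N T E x (cvupd T y t (0, s))) 0 ).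

Definition critH (N T : nat) E (z : R * cvec T) : Prop :=
  dxH N T E (fst z) (snd z) = 0 /\
  forall t, wirt_grad N T E (fst z) (snd z) t = RtoC 0.

Definition xi (N T : nat) E (L : cvec T -> R) (xk : R) (yk : cvec T) (x : R) : R :=
  dxH N T E xk yk * (x - xk) + / 2 * dxxH N T E xk yk * (x - xk) ^ 2
  + L yk / 6 * (Rabs (x - xk)) ^ 3.

Definition omega_set (T : nat) (z : nat -> R * cvec T) (zb : R * cvec T) : Prop :=
  exists k : nat -> nat, (forall l, (k l < k (S l))%nat) /\
    is_lim_seq (fun l => znorm T (zsub T (z (k l)) zb)) 0.

Definition zdist (T : nat) (z : R * cvec T) (Sset : R * cvec T -> Prop) : Rbar :=
  Glb_Rbar (fun r => exists s, Sset s /\ r = znorm T (zsub T z s)).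

(* Main.v *)
Require Import Defs.
From Stdlib Require Import Reals Lra Lia ClassicalEpsilon Classical FunctionalExtensionality.
From Coquelicot Require Import Coquelicot.
From mathcomp Require Import ssreflect ssrbool eqtype ssrnat fintype bigop seq.
From mathcomp Require Import zify.
Open Scope R_scope.

Definition incr (phi : nat -> nat) := forall n, (phi n < phi (S n))%nat.

Lemma incr_ge phi : incr phi -> forall n, (n <= phi n)%nat.
Proof. move=> H; elim=> [|n IH]; first lia. have := H n; lia. Qed.

Lemma incr_mono phi : incr phi -> forall n m, (n <= m)%nat -> (phi n <= phi m)%nat.
Proof.
move=> H n m; elim: m => [|m IH] Hnm.
- have -> : n = 0%nat by lia. lia.
- case: (n =P m.+1) => [->|Hne]; first lia. have := H m. have := IH ltac:(lia). lia.
Qed.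

Lemma incr_comp phi psi : incr phi -> incr psi -> incr (fun n => phi (psi n)).
Proof. move=> Hp Hs n. have := incr_mono _ Hp _ _ (Hs n). have := Hp (psi n). lia. Qed.

Lemma incr_ev phi : incr phi -> filterlim phi eventually eventually.
Proof. move=> H; apply: eventually_subseq => n; have := H n => /ltP. done. Qed.

Lemma extract (P : nat -> nat -> Prop) :
  (forall n M, exists k, (M <= k)%nat /\ P n k) ->
  exists phi, incr phi /\ forall n, P n (phi n).
Proof.
move=> H.
pose f n M := proj1_sig (constructive_indefinite_description _ (H n M)).
have Hf : forall n M, (M <= f n M)%nat /\ P n (f n M).
  by move=> n M; rewrite /f; case: constructive_indefinite_description.
pose fix phi n := match n with O => f O O | S m => f (S m) (S (phi m)) end.
exists phi; split.
- move=> n /=. have := proj1 (Hf n.+1 (phi n).+1). lia.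
- case=> [|n] /=; [exact: proj2 (Hf _ _) | exact: proj2 (Hf _ _)].
Qed.

Lemma small_inv (eps : posreal) : exists n : nat, forall k, (n <= k)%nat -> / (INR k + 1) < eps.
Proof.
have He := cond_pos eps.
case: (nfloor_ex (/ eps)) => [|n Hn]; first (left; apply: Rinv_0_lt_compat; lra).
exists n => k Hk.
have Hk' : INR n <= INR k by apply: le_INR; apply/leP.
have Hpos : 0 < INR n + 1 by have := pos_INR n; lra.
apply: Rle_lt_trans (_ : / (INR n + 1) < eps).
- apply: Rinv_le_contravar; lra.
- rewrite -(Rinv_inv eps). apply: Rinv_lt_contravar; [apply: Rmult_lt_0_compat => //; apply: Rinv_0_lt_compat|]; lra.
Qed.

Lemma BW1 (u : nat -> R) M : (forall n, Rabs (u n) <= M) ->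
  exists phi, incr phi /\ is_lim_seq (fun n => u (phi n)) (real (Lim_seq (fun n => u (phi n)))).
Proof.
move=> HM.
have [l Hl] := Bolzano_Weierstrass u (fun c => -M <= c <= M) (compact_P3 (-M) M)
  (fun n => proj1 (Rabs_le_between _ _) (HM n)).
have [phi [Hi Hp]] : exists phi, incr phi /\ forall n, Rabs (u (phi n) - l) < / (INR n + 1).
  apply: (extract (fun n k => Rabs (u k - l) < / (INR n + 1))) => n K.
  have Hpos : 0 < / (INR n + 1) by apply: Rinv_0_lt_compat; have := pos_INR n; lra.
  have [p [Hp1 Hp2]] := Hl (disc l (mkposreal _ Hpos)) K (ex_intro _ (mkposreal _ Hpos) (fun y h => h)).
  exists p; split => //. by apply/leP.
have Hlim : is_lim_seq (fun n => u (phi n)) l.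
  apply/is_lim_seq_spec => eps.
  have [n0 Hn0] := small_inv eps.
  exists n0 => k Hk. apply: Rlt_trans (Hp k) _. apply: Hn0. by apply/leP.
exists phi; split => //. by rewrite (is_lim_seq_unique _ _ Hlim).
Qed.

Lemma BWmulti (I : eqType) (c : I -> nat -> R) (r : seq I) :
 (forall i, exists M, forall n, Rabs (c i n) <= M) ->
 exists phi, incr phi /\ forall i, i \in r ->
   is_lim_seq (fun n => c i (phi n)) (real (Lim_seq (fun n => c i (phi n)))).
Proof.
move=> HB; elim: r => [|a r [phi [Hi Hr]]].
- exists (fun n => n); split => // n; lia.
- have [M HM] := HB a.
  have [psi [Hps Hl]] := BW1 (fun n => c a (phi n)) M (fun n => HM (phi n)).
  exists (fun n => phi (psi n)); split; first exact: incr_comp.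
  move=> i; rewrite in_cons => /orP [/eqP ->|Hin] //.
  have H := is_lim_seq_subseq _ _ psi (incr_ev _ Hps) (Hr i Hin).
  by rewrite (is_lim_seq_unique _ _ H).
Qed.

Lemma big_nonneg (I : Type) (r : seq I) (F : I -> R) :
  (forall i, 0 <= F i) -> 0 <= \big[Rplus/R0]_(i <- r) F i.
Proof. move=> H; elim: r => [|a r IH]; rewrite ?big_nil ?big_cons; [lra|have := H a; lra]. Qed.

Lemma big_term_le (I : eqType) (r : seq I) (F : I -> R) i :
  (forall i, 0 <= F i) -> i \in r -> F i <= \big[Rplus/R0]_(j <- r) F j.
Proof.
move=> H; elim: r => [|a r IH] //; rewrite big_cons in_cons => /orP [/eqP ->|Hin].
- have := big_nonneg _ r F H; lra.
- have := IH Hin; have := H a; lra.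
Qed.

Lemma big_lim (I : Type) (r : seq I) (F : I -> nat -> R) (l : I -> R) :
  (forall i, is_lim_seq (F i) (l i)) ->
  is_lim_seq (fun n => \big[Rplus/R0]_(i <- r) F i n) (\big[Rplus/R0]_(i <- r) l i).
Proof.
move=> H; elim: r => [|a r IH].
- rewrite big_nil. apply: is_lim_seq_ext (is_lim_seq_const 0) => n; by rewrite big_nil.
- rewrite big_cons. apply: is_lim_seq_ext (is_lim_seq_plus' _ _ _ _ (H a) IH) => n.
  by rewrite big_cons.
Qed.

Lemma big_exd (I : Type) (r : seq I) (F : I -> R -> R) x :
  (forall i, ex_derive (F i) x) ->
  ex_derive (fun s => \big[Rplus/R0]_(i <- r) F i s) x.
Proof.
move=> H; elim: r => [|a r IH].
- apply: ex_derive_ext (ex_derive_const 0 x) => s; by rewrite big_nil.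
- apply: ex_derive_ext (ex_derive_plus _ _ _ (H a) IH) => s; by rewrite big_cons.
Qed.

Lemma Cmod_sq z : Cmod z ^ 2 = fst z ^ 2 + snd z ^ 2.
Proof. rewrite /Cmod pow2_sqrt //; nra. Qed.

Lemma abs_le_sqrt a S : a ^ 2 <= S -> Rabs a <= sqrt S.
Proof. move=> H; rewrite -sqrt_Rsqr_abs; apply: sqrt_le_1_alt; rewrite /Rsqr; lra. Qed.

Lemma cvnorm2_ge0 T y : 0 <= cvnorm2 T y.
Proof. apply: big_nonneg => i; apply: pow2_ge_0. Qed.

Lemma coord_le_y T (y : cvec T) t : fst (y t) ^ 2 + snd (y t) ^ 2 <= cvnorm2 T y.
Proof.
rewrite -Cmod_sq. apply: (big_term_le _ _ (fun t => Cmod (y t) ^ 2)) => //.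
- move=> i; apply: pow2_ge_0.
- exact: mem_index_enum.
Qed.

Lemma znorm_x T (z : R * cvec T) : Rabs (fst z) <= znorm T z.
Proof. apply: abs_le_sqrt. have := cvnorm2_ge0 T (snd z); lra. Qed.
Lemma znorm_y1 T (z : R * cvec T) t : Rabs (fst (snd z t)) <= znorm T z.
Proof. apply: abs_le_sqrt. have := coord_le_y T (snd z) t. have := pow2_ge_0 (fst z). have := pow2_ge_0 (snd (snd z t)). lra. Qed.
Lemma znorm_y2 T (z : R * cvec T) t : Rabs (snd (snd z t)) <= znorm T z.
Proof. apply: abs_le_sqrt. have := coord_le_y T (snd z) t. have := pow2_ge_0 (fst z). have := pow2_ge_0 (fst (snd z t)). lra. Qed.

Definition coordconv T (zs : nat -> R * cvec T) (zb : R * cvec T) :=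
  is_lim_seq (fun n => fst (zs n)) (fst zb) /\
  forall t, is_lim_seq (fun n => fst (snd (zs n) t)) (fst (snd zb t)) /\
            is_lim_seq (fun n => snd (snd (zs n) t)) (snd (snd zb t)).

Lemma lim_of_diff u l (v : nat -> R) :
  (forall n, Rabs (u n - l) <= v n) -> is_lim_seq v 0 -> is_lim_seq u l.
Proof.
move=> H Hv.
have : is_lim_seq (fun n => u n - l) 0.
  apply/is_lim_seq_abs_0. apply: (is_lim_seq_le_le (fun _ => 0) _ v) => //.
  - move=> n; split; [apply: Rabs_pos|exact: H].
  - exact: is_lim_seq_const.
move=> H0. have := is_lim_seq_plus' _ _ _ _ H0 (is_lim_seq_const l).
rewrite Rplus_0_l. apply: is_lim_seq_ext => n; ring.
Qed.

Lemma conv_of_znorm T zs zb :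
  is_lim_seq (fun n => znorm T (zsub T (zs n) zb)) 0 -> coordconv T zs zb.
Proof.
move=> H; split; [|move=> t; split]; apply: lim_of_diff H => n.
- exact: (znorm_x T (zsub T (zs n) zb)).
- have := znorm_y1 T (zsub T (zs n) zb) t. by rewrite /zsub /=.
- have := znorm_y2 T (zsub T (zs n) zb) t. by rewrite /zsub /=.
Qed.

Lemma lim_sq_diff u (l : R) : is_lim_seq u l -> is_lim_seq (fun n => (u n - l) ^ 2) 0.
Proof.
move=> H. have H1 := is_lim_seq_minus' _ _ _ _ H (is_lim_seq_const l).
have H2 := is_lim_seq_mult' _ _ _ _ H1 (is_lim_seq_mult' _ _ _ _ H1 (is_lim_seq_const 1)).
move: H2; rewrite Rminus_diag !Rmult_0_l. apply: is_lim_seq_ext => n /=; ring.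
Qed.

Lemma znorm_of_conv T zs zb :
  coordconv T zs zb -> is_lim_seq (fun n => znorm T (zsub T (zs n) zb)) 0.
Proof.
move=> [Hx Hy].
have Hin : is_lim_seq (fun n => (fst (zs n) - fst zb) ^ 2 +
     cvnorm2 T (fun t => Cminus (snd (zs n) t) (snd zb t))) (0 + \big[Rplus/R0]_(t < T) (0 + 0)).
  apply: is_lim_seq_plus'; first exact: lim_sq_diff.
  apply: is_lim_seq_ext (big_lim _ _ (fun t n => (fst (snd (zs n) t) - fst (snd zb t)) ^ 2 +
                                      (snd (snd (zs n) t) - snd (snd zb t)) ^ 2) (fun _ => 0 + 0) _).
  + move=> n; rewrite /cvnorm2; apply: eq_bigr => t _; rewrite Cmod_sq /=; ring.
  + move=> t; have [H1 H2] := Hy t; apply: is_lim_seq_plus'; exact: lim_sq_diff.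
have Hz : \big[Rplus/R0]_(t < T) (0 + 0) = 0.
  elim: (index_enum _) => [|a r IH]; rewrite ?big_nil ?big_cons //.
  rewrite IH; lra.
rewrite Hz Rplus_0_l in Hin.
rewrite -sqrt_0. apply: (is_lim_seq_continuous sqrt) => //.
apply: continuity_pt_sqrt; lra.
Qed.

Lemma is_derive_eq (f : R -> R) x d d' : is_derive f x d -> d = d' -> is_derive f x d'.
Proof. by move=> H <-. Qed.

Lemma mono_nonincr g dg a b : (forall t, is_derive g t (dg t)) ->
  (forall t, a <= t <= b -> dg t <= 0) -> a <= b -> g b <= g a.
Proof.
move=> Hd Hn Hab.
have [c [Hc Heq]] := MVT_gen g a b dg (fun t _ => Hd t)
  (fun t _ => proj2 (continuity_pt_filterlim g t) (ex_derive_continuous g t (ex_intro _ _ (Hd t)))).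
move: Hc; rewrite Rmin_left // Rmax_right // => Hc.
have := Hn c Hc. nra.
Qed.

Lemma shift_derive (f f1 : R -> R) x : (forall t, is_derive f t (f1 t)) ->
  forall t, is_derive (fun t => f (x + t)) t (f1 (x + t)).
Proof.
move=> H t. apply: is_derive_eq.
- apply: (is_derive_comp f (fun t => x + t)); first exact: H.
  auto_derive => //; ring.
- rewrite /scal /= /mult /=; ring.
Qed.

Lemma taylor_up_pos (f f1 f2 : R -> R) L :
  (forall t, is_derive f t (f1 t)) -> (forall t, is_derive f1 t (f2 t)) ->
  (forall t u, Rabs (f2 t - f2 u) <= L * Rabs (t - u)) ->
  forall x s, 0 <= s ->
  f (x + s) <= f x + (f1 x * s + / 2 * f2 x * s ^ 2 + L / 6 * Rabs s ^ 3).
Proof.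
move=> H0 H1 HL x s Hs.
pose p1 t := f1 (x + t) - f1 x - f2 x * t - L / 2 * t ^ 2.
pose p0 t := f (x + t) - f x - f1 x * t - / 2 * f2 x * t ^ 2 - L / 6 * t ^ 3.
have Hd1 : forall t, is_derive p1 t (f2 (x + t) - f2 x - L * t).
  move=> t. have A := shift_derive f1 f2 x H1 t.
  have B : is_derive (fun t => f1 x + f2 x * t + L / 2 * t ^ 2) t (f2 x + L * t).
    auto_derive => //; field.
  apply: (is_derive_ext _ _ _ _ _ (is_derive_eq _ _ _ _ (is_derive_minus _ _ _ _ _ A B) _)).
  + move=> u; rewrite /p1 /minus /plus /opp /=; ring.
  + rewrite /minus /plus /opp /=; ring.
have Hd0 : forall t, is_derive p0 t (p1 t).
  move=> t. have A := shift_derive f f1 x H0 t.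
  have B : is_derive (fun t => f x + f1 x * t + / 2 * f2 x * t ^ 2 + L / 6 * t ^ 3) t
     (f1 x + f2 x * t + L / 2 * t ^ 2).
    auto_derive => //; field.
  apply: (is_derive_ext _ _ _ _ _ (is_derive_eq _ _ _ _ (is_derive_minus _ _ _ _ _ A B) _)).
  + move=> u; rewrite /p0 /minus /plus /opp /=; ring.
  + rewrite /p1 /minus /plus /opp /=; ring.
have Hp1 : forall t, 0 <= t -> p1 t <= 0.
  move=> t Ht. have <- : p1 0 = 0 by rewrite /p1 Rplus_0_r; ring.
  apply: (mono_nonincr p1 _ 0 t Hd1) => // u Hu.
  have := HL (x + u) x. rewrite (_ : x + u - x = u); last ring.
  rewrite (Rabs_pos_eq u); last lra. move=> /Rabs_le_between. lra.
have Hp0 : p0 s <= p0 0.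
  apply: (mono_nonincr p0 p1 0 s Hd0) => // u Hu. apply: Hp1; lra.
move: Hp0; rewrite /p0 Rplus_0_r Rabs_pos_eq //. lra.
Qed.

Lemma taylor_pos (f f1 f2 : R -> R) L :
  (forall t, is_derive f t (f1 t)) -> (forall t, is_derive f1 t (f2 t)) ->
  (forall t u, Rabs (f2 t - f2 u) <= L * Rabs (t - u)) ->
  forall x s, 0 <= s ->
  f (x + s) <= f x + (f1 x * s + / 2 * f2 x * s ^ 2 + L / 6 * Rabs s ^ 3) /\
  f x + (f1 x * s + / 2 * f2 x * s ^ 2 - L / 6 * Rabs s ^ 3) <= f (x + s).
Proof.
move=> H0 H1 HL x s Hs; split; first exact: taylor_up_pos.
have HL' : forall t u, Rabs (- f2 t - - f2 u) <= L * Rabs (t - u).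
  move=> t u. rewrite (_ : - f2 t - - f2 u = - (f2 t - f2 u)); last ring.
  rewrite Rabs_Ropp; exact: HL.
have := taylor_up_pos (fun t => - f t) (fun t => - f1 t) (fun t => - f2 t) L
  (fun t => is_derive_opp _ _ _ (H0 t)) (fun t => is_derive_opp _ _ _ (H1 t)) HL' x s Hs.
move=> /=; lra.
Qed.

Lemma taylor (f f1 f2 : R -> R) L :
  (forall t, is_derive f t (f1 t)) -> (forall t, is_derive f1 t (f2 t)) ->
  (forall t u, Rabs (f2 t - f2 u) <= L * Rabs (t - u)) ->
  forall x s,
  f (x + s) <= f x + (f1 x * s + / 2 * f2 x * s ^ 2 + L / 6 * Rabs s ^ 3) /\
  f x + (f1 x * s + / 2 * f2 x * s ^ 2 - L / 6 * Rabs s ^ 3) <= f (x + s).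
Proof.
move=> H0 H1 HL x s.
case: (Rle_lt_dec 0 s) => Hs; first exact: taylor_pos.
have Hg0 : forall t, is_derive (fun t => f (- t)) t (- f1 (- t)).
  move=> t; apply: is_derive_eq.
  - apply: (is_derive_comp f (fun t => - t)); first exact: H0.
    auto_derive => //; ring.
  - rewrite /scal /= /mult /=; ring.
have Hg1 : forall t, is_derive (fun t => - f1 (- t)) t (f2 (- t)).
  move=> t; apply: is_derive_eq.
  - apply: is_derive_opp. apply: (is_derive_comp f1 (fun t => - t)); first exact: H1.
    auto_derive => //; ring.
  - rewrite /opp /scal /= /mult /=; ring.
have HgL : forall t u, Rabs (f2 (- t) - f2 (- u)) <= L * Rabs (t - u).
  move=> t u; have := HL (- t) (- u).
  by rewrite (_ : - t - - u = - (t - u)) ?Rabs_Ropp; last ring.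
have := taylor_pos _ _ _ L Hg0 Hg1 HgL (- x) (- s) ltac:(lra).
rewrite (_ : - (- x + - s) = x + s); last ring.
rewrite Ropp_involutive Rabs_Ropp.
rewrite (_ : (- s) ^ 2 = s ^ 2); last ring.
move=> [A B]; split; lra.
Qed.

Lemma stat (f : R -> R) x0 C : ex_derive f x0 -> 0 <= C ->
  (forall s, f x0 <= f (x0 + s) + C * Rabs s ^ 3) -> Derive f x0 = 0.
Proof.
move=> Hex HC Hm.
have Hd := Derive_correct f x0 Hex.
set l := Derive f x0 in Hd *.
move/is_derive_Reals: Hd => Hd.
apply: NNPP => Hl.
have Hla : 0 < Rabs l by apply: Rabs_pos_lt.
have [delta Hdel] := Hd (Rabs l / 2) ltac:(lra).
have Hdp := cond_pos delta.
pose m := Rmin (delta / 2) (Rmin 1 (Rabs l / (4 * (C + 1)))).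
have Hm1 : m <= delta / 2 by apply: Rmin_l.
have Hm2 : m <= 1 by apply: Rle_trans (Rmin_r _ _) (Rmin_l _ _).
have Hm3 : m <= Rabs l / (4 * (C + 1)) by apply: Rle_trans (Rmin_r _ _) (Rmin_r _ _).
have Hm0 : 0 < m.
  apply: Rmin_pos; first lra. apply: Rmin_pos; first lra.
  apply: Rdiv_lt_0_compat; lra.
have HCm : C * m ^ 2 < Rabs l / 2.
  have : C * m ^ 2 <= C * m by rewrite /=; apply: Rmult_le_compat_l => //; nra.
  have : C * m <= C * (Rabs l / (4 * (C + 1))) by apply: Rmult_le_compat_l.
  have : C * (Rabs l / (4 * (C + 1))) < Rabs l / 2.
    rewrite (_ : C * (Rabs l / (4 * (C + 1))) = Rabs l / 4 * (C / (C + 1))); last (field; lra).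
    have : C / (C + 1) < 1 by apply/Rlt_div_l; lra.
    nra.
  lra.
case: (Rle_lt_dec 0 l) => Hs.
- have Hl0 : 0 < l by lra.
  rewrite Rabs_pos_eq in Hla HCm Hdel; try lra.
  have := Hdel (- m) ltac:(lra) ltac:(rewrite Rabs_Ropp Rabs_pos_eq; lra).
  move/Rabs_lt_between => [A _].
  have Hq : (f (x0 + - m) - f x0) < - m * (l / 2).
    have E : f (x0 + - m) - f x0 = ((f (x0 + - m) - f x0) / - m) * (- m) by field; lra.
    rewrite E. nra.
  have := Hm (- m). rewrite Rabs_Ropp Rabs_pos_eq; last lra.
  rewrite (_ : m ^ 3 = m * m ^ 2); last ring. nra.
- rewrite Rabs_left in Hla HCm Hdel; try lra.
  have := Hdel m ltac:(lra) ltac:(rewrite Rabs_pos_eq; lra).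
  move/Rabs_lt_between => [_ A].
  have Hq : (f (x0 + m) - f x0) < m * (l / 2).
    have E : f (x0 + m) - f x0 = ((f (x0 + m) - f x0) / m) * m by field; lra.
    rewrite E. nra.
  have := Hm m. rewrite Rabs_pos_eq; last lra.
  rewrite (_ : m ^ 3 = m * m ^ 2); last ring. nra.
Qed.

Lemma term_eq N (e : C) i x (y : C) :
  Cmod (Cminus e (Cmult (steer N x i) (Cconj y))) ^ 2 =
  (fst e - (cos (INR i * x) / sqrt (INR N) * fst y + sin (INR i * x) / sqrt (INR N) * snd y)) ^ 2
  + (snd e - (sin (INR i * x) / sqrt (INR N) * fst y - cos (INR i * x) / sqrt (INR N) * snd y)) ^ 2.
Proof. rewrite Cmod_sq /Cminus /Cplus /Copp /Cmult /Cconj /steer /=; ring. Qed.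

Lemma lim_sq u (l : R) : is_lim_seq u l -> is_lim_seq (fun n => u n ^ 2) (l ^ 2).
Proof.
move=> H. have := is_lim_seq_mult' _ _ _ _ H (is_lim_seq_mult' _ _ _ _ H (is_lim_seq_const 1)).
by [].
Qed.

Lemma lim_cos i N xs (xb : R) : is_lim_seq xs xb ->
  is_lim_seq (fun n => cos (INR i * xs n) / sqrt (INR N)) (cos (INR i * xb) / sqrt (INR N)).
Proof.
move=> H; apply: (is_lim_seq_continuous (fun x => cos (INR i * x) / sqrt (INR N))) => //.
have Hd : ex_derive (fun x => cos (INR i * x) / sqrt (INR N)) xb by auto_derive.
apply/continuity_pt_filterlim; exact: (ex_derive_continuous _ _ Hd).
Qed.

Lemma lim_sin i N xs (xb : R) : is_lim_seq xs xb ->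
  is_lim_seq (fun n => sin (INR i * xs n) / sqrt (INR N)) (sin (INR i * xb) / sqrt (INR N)).
Proof.
move=> H; apply: (is_lim_seq_continuous (fun x => sin (INR i * x) / sqrt (INR N))) => //.
have Hd : ex_derive (fun x => sin (INR i * x) / sqrt (INR N)) xb by auto_derive.
apply/continuity_pt_filterlim; exact: (ex_derive_continuous _ _ Hd).
Qed.

Lemma H_cont N T E xs (ys : nat -> cvec T) (xb : R) (yb : cvec T) : is_lim_seq xs xb ->
  (forall t, is_lim_seq (fun n => fst (ys n t)) (fst (yb t)) /\
             is_lim_seq (fun n => snd (ys n t)) (snd (yb t))) ->
  is_lim_seq (fun n => Hfun N T E (xs n) (ys n)) (Hfun N T E xb yb).
Proof.
move=> Hx Hy. rewrite /Hfun. apply: big_lim => i. apply: big_lim => t.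
have [H1 H2] := Hy t.
rewrite term_eq. apply: is_lim_seq_ext => [n|]; first by rewrite term_eq.
have Hc := lim_cos i N _ _ Hx. have Hs := lim_sin i N _ _ Hx.
apply: is_lim_seq_plus'; apply: lim_sq; apply: is_lim_seq_minus'; try exact: is_lim_seq_const.
- apply: is_lim_seq_plus'; exact: is_lim_seq_mult'.
- apply: is_lim_seq_minus'; exact: is_lim_seq_mult'.
Qed.

Lemma exd_y1 N T E x (y : cvec T) t :
  ex_derive (fun s => Hfun N T E x (cvupd T y t (RtoC s))) 0.
Proof.
rewrite /Hfun. apply: big_exd => i. apply: big_exd => t'.
rewrite /cvupd. case: (t' == t).
- apply: ex_derive_ext => [s|]; first by rewrite term_eq.
  rewrite /Cplus /RtoC /=. auto_derive => //.
- exact: ex_derive_const.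
Qed.

Lemma exd_y2 N T E x (y : cvec T) t :
  ex_derive (fun s => Hfun N T E x (cvupd T y t (0, s))) 0.
Proof.
rewrite /Hfun. apply: big_exd => i. apply: big_exd => t'.
rewrite /cvupd. case: (t' == t).
- apply: ex_derive_ext => [s|]; first by rewrite term_eq.
  rewrite /Cplus /=. auto_derive => //.
- exact: ex_derive_const.
Qed.

Lemma cvupd0 T (y : cvec T) t : cvupd T y t (0, 0) = y.
Proof.
apply: functional_extensionality => t'. rewrite /cvupd. case: (t' == t) => //.
case: (y t') => a b. by rewrite /Cplus /= !Rplus_0_r.
Qed.

Lemma subseq_conv T (zs : nat -> R * cvec T) M :
  (forall n, znorm T (zs n) <= M) ->
  exists phi zb, incr phi /\ is_lim_seq (fun n => znorm T (zsub T (zs (phi n)) zb)) 0.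
Proof.
move=> HM.
pose c (o : option ('I_T * bool)) n := match o with
  | None => fst (zs n)
  | Some (t, b) => if b then fst (snd (zs n) t) else snd (snd (zs n) t) end.
have HB : forall o, exists M, forall n, Rabs (c o n) <= M.
  move=> [[t [|]]|]; exists M => n /=.
  - exact: Rle_trans (znorm_y1 T (zs n) t) (HM n).
  - exact: Rle_trans (znorm_y2 T (zs n) t) (HM n).
  - exact: Rle_trans (znorm_x T (zs n)) (HM n).
have [phi [Hi Hl]] := BWmulti _ c (index_enum _) HB.
pose lim o := real (Lim_seq (fun n => c o (phi n))).
exists phi, (lim None, fun t => (lim (Some (t, true)), lim (Some (t, false)))).
split => //. apply: znorm_of_conv. split; [|move=> t; split].
- exact: (Hl None (mem_index_enum _)).
- exact: (Hl (Some (t, true)) (mem_index_enum _)).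
- exact: (Hl (Some (t, false)) (mem_index_enum _)).
Qed.

Lemma glb_props (S : R -> Prop) : (exists r, S r) -> (forall r, S r -> 0 <= r) ->
  0 <= real (Glb_Rbar S) /\ forall r, S r -> real (Glb_Rbar S) <= r.
Proof.
move=> [r0 Hr0] Hpos.
have [Hlb Hg] := Glb_Rbar_correct S.
have H0 : Rbar_le 0 (Glb_Rbar S) by apply: Hg => r Hr; exact: Hpos.
have H1 := Hlb r0 Hr0.
move: H0 H1 Hlb; case: (Glb_Rbar S) => [g| |] //= H0 H1 Hlb.
Qed.

Theorem theorem1 (N T : nat) (E : 'I_N -> 'I_T -> C) (L : cvec T -> R)
  (x : nat -> R) (y : nat -> cvec T) :
  (1 <= N)%nat -> (1 <= T)%nat ->
  (forall w, 0 < L w) ->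
  (* Assumption A (i) *)
  (exists m, forall s w, m <= Hfun N T E s w) ->
  (* Assumption A (ii) *)
  (forall w s, ex_derive (fun s' => Hfun N T E s' w) s) ->
  (forall w s, ex_derive (fun s' => dxH N T E s' w) s) ->
  (forall w s, continuous (fun s' => dxxH N T E s' w) s) ->
  (forall w s1 s2, Rabs (dxxH N T E s1 w - dxxH N T E s2 w) <= L w * Rabs (s1 - s2)) ->
  (* Assumption A (iii) *)
  (exists nu, 0 < nu /\ forall s,
      convex_cv T (fun w => Hfun N T E s w - nu / 2 * cvnorm2 T w)) ->
  (* Assumption A (iv) *)
  (exists lm lp, 0 < lm /\ lm <= lp /\ forall k, lm <= L (y k) <= lp) ->
  (* the cubic-regularized alternating scheme *)
  (forall k u, xi N T E L (x k) (y k) (x (S k)) <= xi N T E L (x k) (y k) u) ->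
  (forall k w, Hfun N T E (x (S k)) (y (S k)) <= Hfun N T E (x (S k)) w) ->
  (* boundedness of the sequence *)
  (exists M, forall k, znorm T (x k, y k) <= M) ->
  (exists zb, omega_set T (fun k => (x k, y k)) zb) /\
  (forall zb, omega_set T (fun k => (x k, y k)) zb -> critH N T E zb) /\
  is_lim_seq (fun k => real (zdist T (x k, y k) (omega_set T (fun k => (x k, y k))))) 0.
Proof.
move=> _ _ HLpos _ Hd1 Hd2 _ Hlip _ [lm [lp [Hlm [Hlmp HLb]]]] Hxi Hymin [M HM].
set Hk := fun k => Hfun N T E (x k) (y k).
have Tay : forall w x0 s,
  Hfun N T E (x0 + s) w <= Hfun N T E x0 w + (dxH N T E x0 w * s + / 2 * dxxH N T E x0 w * s ^ 2 + L w / 6 * Rabs s ^ 3) /\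
  Hfun N T E x0 w + (dxH N T E x0 w * s + / 2 * dxxH N T E x0 w * s ^ 2 - L w / 6 * Rabs s ^ 3) <= Hfun N T E (x0 + s) w.
  move=> w x0 s.
  apply: (taylor (fun s' => Hfun N T E s' w) (fun s' => dxH N T E s' w) (fun s' => dxxH N T E s' w) (L w)).
  - move=> t; exact: (Derive_correct _ _ (Hd1 w t)).
  - move=> t; exact: (Derive_correct _ _ (Hd2 w t)).
  - exact: Hlip.
have Hstep : forall k s, Hk (S k) <= Hfun N T E (x k + s) (y k) + lp / 3 * Rabs s ^ 3.
  move=> k s. rewrite /Hk.
  apply: Rle_trans (Hymin k (y k)) _.
  have [A _] := Tay (y k) (x k) (x (S k) - x k).
  rewrite (_ : x k + (x (S k) - x k) = x (S k)) in A; last ring.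
  have B := Hxi k (x k + s). rewrite /xi in B.
  rewrite (_ : x k + s - x k = s) in B; last ring.
  have [_ C] := Tay (y k) (x k) s.
  have [_ D] := HLb k.
  have Hs3 : 0 <= Rabs s ^ 3 by apply: pow_le; apply: Rabs_pos.
  have : L (y k) * Rabs s ^ 3 <= lp * Rabs s ^ 3 by apply: Rmult_le_compat_r.
  lra.
have Hdec : forall k, Hk (S k) <= Hk k.
  move=> k. have := Hstep k 0. rewrite /Hk Rplus_0_r Rabs_R0 /=. lra.
have Hmono : forall m n, (m <= n)%nat -> Hk n <= Hk m.
  move=> m n; elim: n => [|n IH] Hmn.
  - have -> : m = 0%nat by lia. lra.
  - case: (m =P n.+1) => [->|Hne]; first lra.
    have := IH ltac:(lia). have := Hdec n. lra.
have Hbnd : forall zs : nat -> nat, forall n, znorm T (x (zs n), y (zs n)) <= M by move=> zs n; exact: HM.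
have Hcrit : forall zb, omega_set T (fun k => (x k, y k)) zb -> critH N T E zb.
  move=> [xb yb] [k [Hki Hkl]].
  have [Hcx Hcy] := conv_of_znorm _ _ _ Hkl. simpl in Hcx, Hcy.
  have HlimH : is_lim_seq (fun l => Hk (k l)) (Hfun N T E xb yb).
    exact: (H_cont N T E (fun l => x (k l)) (fun l => y (k l)) xb yb Hcx Hcy).
  have Hle : forall m, Hfun N T E xb yb <= Hk m.
    move=> m. have := is_lim_seq_le_loc _ _ _ _ _ HlimH (is_lim_seq_const (Hk m)).
    apply. exists m => n Hn. apply: Hmono. have := incr_ge _ Hki n. move/leP: Hn. lia.
  split.
  - rewrite /dxH /=. apply: (stat _ xb (lp / 3) (Hd1 yb xb)); first lra.
    move=> s.
    have Hl2 : is_lim_seq (fun l => Hfun N T E (x (k l) + s) (y (k l)) + lp / 3 * Rabs s ^ 3)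
                 (Hfun N T E (xb + s) yb + lp / 3 * Rabs s ^ 3).
      apply: is_lim_seq_plus'; last exact: is_lim_seq_const.
      apply: (H_cont N T E (fun l => x (k l) + s) (fun l => y (k l)) (xb + s) yb _ Hcy).
      exact: (is_lim_seq_plus' _ _ _ _ Hcx (is_lim_seq_const s)).
    have := is_lim_seq_le _ _ _ _ _ (is_lim_seq_const (Hfun N T E xb yb)) Hl2. apply.
    move=> l. apply: Rle_trans (Hle (S (k l))) _. exact: Hstep.
  - have Hmin : forall w, Hfun N T E xb yb <= Hfun N T E xb w.
      move=> w.
      have Hcx1 := proj1 (is_lim_seq_incr_1 _ _) Hcx.
      have Hl2 := H_cont N T E (fun l => x (k (S l))) (fun _ => w) xb w Hcx1
                    (fun t => conj (is_lim_seq_const _) (is_lim_seq_const _)).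
      have := is_lim_seq_le _ _ _ _ _ (is_lim_seq_const (Hfun N T E xb yb)) Hl2. apply.
      move=> l. apply: Rle_trans (Hle (k (S l))) _.
      have Hk1 := incr_ge _ Hki (S l).
      case Hks : (k (S l)) => [|j]; first (rewrite Hks in Hk1; lia).
      exact: Hymin.
    move=> t. rewrite /wirt_grad /=.
    have Hcv := cvupd0 T yb t.
    rewrite (stat (fun s => Hfun N T E xb (cvupd T yb t (RtoC s))) 0 0 (exd_y1 N T E xb yb t)).
    + rewrite (stat (fun s => Hfun N T E xb (cvupd T yb t (0, s))) 0 0 (exd_y2 N T E xb yb t)).
      * by rewrite /RtoC Rmult_0_r.
      * lra.
      * move=> s. rewrite /= Hcv Rmult_0_l Rplus_0_r. exact: Hmin.
    + lra.
    + move=> s. rewrite /RtoC /= Hcv Rmult_0_l Rplus_0_r. exact: Hmin.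
have Hne : exists zb, omega_set T (fun k => (x k, y k)) zb.
  have [phi [zb [Hi Hl]]] := subseq_conv T (fun k => (x k, y k)) M HM.
  by exists zb, phi.
split => //; split => //.
set D := fun k => real (zdist T (x k, y k) (omega_set T (fun k => (x k, y k)))).
have HD : forall k, 0 <= D k /\ forall zb, omega_set T (fun k => (x k, y k)) zb ->
             D k <= znorm T (zsub T (x k, y k) zb).
  move=> k. have [zb0 Hz0] := Hne.
  pose S := fun r => exists s, omega_set T (fun k => (x k, y k)) s /\ r = znorm T (zsub T (x k, y k) s).
  have Hex : exists r, S r by eexists; exists zb0; split; [exact: Hz0|reflexivity].
  have Hp : forall r, S r -> 0 <= r by move=> r [s [_ ->]]; apply: sqrt_pos.
  have [A B] := glb_props S Hex Hp.
  split => // zb Hzb. apply: B. exists zb; split => //.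
apply/is_lim_seq_spec => eps.
apply: NNPP => Hev.
have Hinf : forall n K : nat, exists k, (K <= k)%nat /\ eps <= D k.
  move=> n K. apply: NNPP => Hno. apply: Hev. exists K => k Hk0.
  rewrite Rminus_0_r Rabs_pos_eq; last exact: (proj1 (HD k)).
  apply: Rnot_le_lt => Hle. apply: Hno. exists k; split => //. apply/leP. exact: Hk0.
have [psi [Hpi Hps]] := extract (fun _ k => eps <= D k) Hinf.
have [phi [zb [Hphi Hl]]] := subseq_conv T (fun n => (x (psi n), y (psi n))) M (fun n => HM (psi n)).
have Hom : omega_set T (fun k => (x k, y k)) zb.
  exists (fun n => psi (phi n)); split => //; exact: incr_comp.
have := is_lim_seq_le _ _ _ _ _ (is_lim_seq_const eps) Hl. simpl.
have Hep := cond_pos eps.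
move=> H; have : eps <= 0.
  apply: H => n. apply: Rle_trans (Hps (phi n)) _. exact: (proj2 (HD _) zb Hom).
lra.
Qed.
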